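(* Let $p\in(0,1)$. The GHoC Markov chain with state space $S=\mathbb N_0\cup\{\infty\}$ and transition matrix $\Pi_p$ possesses a unique stationary distribution; let $\mathbb P_p^{GHoC}$ denote the law of the corresponding stationary two-sided chain $(n_i)_{i\in\mathbb{Z}}$. Then the sequence $(\tau(n_i))_{i\in\mathbb{Z}}$ is distributed according to the TBF $\mu'_p$, i.e. $\tau(\mathbb P_p^{GHoC})=\mu'_p$.
   Context: Fix $p\in(0,1)$. $\Omega=\{0,1\}^{\mathbb{Z}}$, $\mu_p=\mathrm{Ber}(p)^{\otimes\mathbb{Z}}$, $T:\Omega\to\Omega$, $(T\omega)_i=\omega_i\big(1-(1-\omega_{i-1})(1-\omega_{i+1})\big)$, and the TBF is $\mu'_p=\mu_p\circ T^{-1}$ on $\Omega'=T(\Omega)$. Let $\lambda_{PF}=\tfrac12\big(1-p+\sqrt{(1-p)(3p+1)}\big)$, $\lambda_r=\tfrac12\big(1-p-\sqrt{(1-p)(3p+1)}\big)$, $a=\lambda_r/\lambda_{PF}\in(-1,0)$, and define $g_p:S\to[0,1]$ by $g_p(1)=1-p$, $g_p(\infty)=\lambda_{PF}$, and for $n\ge2$: $g_p(n)=\dfrac{(-1)^{n+1}|a|^n\frac{\lambda_{PF}}{1-\lambda_r}+\frac{\lambda_{PF}}{1-\lambda_{PF}}}{(-1)^n|a|^{n-1}\frac{1}{1-\lambda_r}+\frac{1}{1-\lambda_{PF}}}$. The generalized house-of-cards (GHoC) chain on $S$ (with $\infty+1=\infty$) has transition probabilities: $\Pi_p(0,1)=1$;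 $\Pi_p(1,1)=p$, $\Pi_p(1,2)=1-p$; for $i\in\{2,3,\dots\}\cup\{\infty\}$, $\Pi_p(i,i+1)=g_p(i)$ and $\Pi_p(i,0)=1-g_p(i)$; all other entries are $0$. (The state $n_i$ encodes the distance from site $i$ to the nearest pair of adjacent occupied sites in its past, with value $0$ when the two preceding sites are (empty, occupied).) The map $\tau:S\to\{0,1\}$ is $\tau(n)=\mathbb 1_{\{0,1\}}(n)$, applied coordinatewise to paths. *)

(* Defs.v *)
From HB Require Import structures.
From mathcomp Require Import all_boot all_order all_algebra.
From mathcomp Require Import all_classical all_reals all_analysis.
Set Implicit Arguments. Unset Strict Implicit. Unset Printing Implicit Defensive.
Import Order.TTheory GRing.Theory Num.Theory.
Local Open Scope classical_set_scope.
Local Open Scope ring_scope.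

(** State space S = N_0 ∪ {∞}: [Some n] is the state n, [None] is ∞. *)
Definition GState := option nat.

Section GHoC.
Variables (R : realType) (p : R).

Definition lamPF : R := (1 - p + Num.sqrt ((1 - p) * (3 * p + 1))) / 2.
Definition lamr : R := (1 - p - Num.sqrt ((1 - p) * (3 * p + 1))) / 2.
Definition a_ratio : R := lamr / lamPF.

Definition g_fin (n : nat) : R :=
  ((-1) ^+ n.+1 * `|a_ratio| ^+ n * (lamPF / (1 - lamr)) + lamPF / (1 - lamPF)) /
  ((-1) ^+ n * `|a_ratio| ^+ n.-1 * (1 / (1 - lamr)) + 1 / (1 - lamPF)).

(** g_p on S \ {0} (value at 0 is irrelevant and set to 0) *)
Definition g_p (s : GState) : R :=
  match s with
  | None => lamPF
  | Some 0 => 0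
  | Some 1 => 1 - p
  | Some n => g_fin n
  end.

Definition Pi_p (s t : GState) : R :=
  match s with
  | Some 0 => if t == Some 1 then 1 else 0
  | Some 1 => if t == Some 1 then p else if t == Some 2 then 1 - p else 0
  | Some n => if t == Some n.+1 then g_p (Some n)
              else if t == Some 0 then 1 - g_p (Some n) else 0
  | None => if t == None then g_p None
            else if t == Some 0 then 1 - g_p None else 0
  end.

Definition stationary_dist (pi : GState -> R) : Prop :=
  (forall s, 0 <= pi s) /\
  (\esum_(s in [set: GState]) (pi s)%:E = 1%E) /\
  (forall t, \esum_(s in [set: GState]) (pi s * Pi_p s t)%:E = (pi t)%:E).

Definition tau (s : GState) : bool := (s == Some 0) || (s == Some 1).

(** Probability, under the stationary chain started from pi, of the path
    (n_m, ..., n_{m+k}) = s (independent of m by stationarity). *)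
Definition path_prob (pi : GState -> R) (s : seq GState) : R :=
  match s with
  | [::] => 1
  | s0 :: rest => pi s0 * \prod_(j < size rest) Pi_p (nth s0 s j) (nth s0 s j.+1)
  end.

(** Law of (tau(n_i)) under the stationary GHoC chain, on the cylinder
    {(tau n_{m+j})_{j < size x} = x}. *)
Definition ghoc_tau_cyl (pi : GState -> R) (x : seq bool) : \bar R :=
  \esum_(s in [set s : seq GState | size s = size x /\ map tau s = x])
     (path_prob pi s)%:E.

End GHoC.

Definition Omega := int -> bool.
Definition T_map (w : Omega) : Omega :=
  fun i => w i && (w (i - 1) || w (i + 1)).

Section TBF.
Variables (R : realType) (p : R).

Definition ext (a : int) (n : nat) (w : n.-tuple bool) : Omega :=
  fun i => if ((0 <= i - a) && (i - a < n%:Z))%R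
           then nth false w `|i - a|%N else false.

(** mu_p of an event E depending only on the coordinates in [a, a+n):
    sum over the configurations of the window with product Bernoulli weights. *)
Definition mu_p_window (a : int) (n : nat) (E : Omega -> bool) : R :=
  \sum_(w : n.-tuple bool)
     (\prod_(j < n) (if tnth w j then p else 1 - p)) * (E (ext a w))%:R.

(** mu'_p = mu_p o T^{-1} on the cylinder {w' | w'_(m+j) = x_j, j < size x}.
    T^{-1} of this cylinder depends only on the window [m-1, m+size x]. *)
Definition tbf_cyl (m : int) (x : seq bool) : R :=
  mu_p_window (m - 1) (size x).+2
    (fun w => [forall j : 'I_(size x), T_map w (m + j%:Z) == nth false x j]).

End TBF.

(* Main.v *)
Require Import Defs.
From mathcomp Require Import all_boot all_order all_algebra.
From mathcomp Require Import all_classical all_reals all_analysis.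
From mathcomp Require Import lra ring zify.
Import Order.TTheory GRing.Theory Num.Theory.
Local Open Scope classical_set_scope.
Local Open Scope ring_scope.

Section Alg.
Variables (R : realType) (p : R).
Hypothesis hp : 0 < p < 1.

Let sq := Num.sqrt ((1 - p) * (3 * p + 1)).

Lemma p_gt0 : 0 < p. Proof. by case/andP: hp. Qed.
Lemma p_lt1 : p < 1. Proof. by case/andP: hp. Qed.

Lemma sq2 : sq ^+ 2 = (1 - p) * (3 * p + 1).
Proof. rewrite /sq sqr_sqrtr //; have := p_gt0; have := p_lt1; nra. Qed.

Lemma sq_ge0 : 0 <= sq. Proof. exact: sqrtr_ge0. Qed.

Lemma sq_gt : 1 - p < sq.
Proof.
have h2 := sq2; have h0 := sq_ge0; have := p_gt0; have := p_lt1.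
move=> p1 p0; rewrite -subr_gt0.
have : 0 < sq ^+ 2 - (1 - p) ^+ 2 by rewrite h2; nra.
rewrite subr_sqr; move=> h.
have : 0 < sq + (1 - p) by nra.
move=> hpos; nra.
Qed.

Lemma sq_lt : sq < 1 + p.
Proof.
have h2 := sq2; have h0 := sq_ge0; have := p_gt0; have := p_lt1.
move=> p1 p0.
have : sq ^+ 2 < (1 + p) ^+ 2 by rewrite h2; nra.
move=> h; nra.
Qed.

Lemma L_def : lamPF p = (1 - p + sq) / 2. Proof. by []. Qed.
Lemma r_def : lamr p = (1 - p - sq) / 2. Proof. by []. Qed.

Lemma L_gt0 : 0 < lamPF p.
Proof. rewrite L_def; have := sq_ge0; have := p_lt1; lra. Qed.
Lemma L_lt1 : lamPF p < 1.
Proof. rewrite L_def; have := sq_lt; have := p_gt0; lra. Qed.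
Lemma r_lt0 : lamr p < 0.
Proof. rewrite r_def; have := sq_gt; lra. Qed.
Lemma Lr_pos : 0 < lamPF p + lamr p.
Proof. rewrite L_def r_def; have := p_lt1; lra. Qed.

Lemma L_quad : lamPF p ^+ 2 = (1 - p) * lamPF p + p * (1 - p).
Proof.
rewrite L_def; apply/eqP; rewrite -subr_eq0; apply/eqP.
transitivity ((sq ^+ 2 - (1 - p) * (3 * p + 1)) / 4); first by field.
by rewrite sq2 subrr mul0r.
Qed.

Lemma r_quad : lamr p ^+ 2 = (1 - p) * lamr p + p * (1 - p).
Proof.
rewrite r_def; apply/eqP; rewrite -subr_eq0; apply/eqP.
transitivity ((sq ^+ 2 - (1 - p) * (3 * p + 1)) / 4); first by field.
by rewrite sq2 subrr mul0r.
Qed.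

Let L := lamPF p.
Let r := lamr p.
Let a := a_ratio p.
Let W := 1 / (1 - L).
Let Z := 1 / (1 - r).

Lemma a_neg : a < 0.
Proof. rewrite /a /a_ratio; rewrite pmulr_llt0 ?invr_gt0; [exact: r_lt0|exact: L_gt0]. Qed.

Lemma abs_a : `|a| = - a.
Proof. by rewrite ltr0_norm // a_neg. Qed.

Lemma La : L * a = r.
Proof. rewrite /a /a_ratio /L mulrC divfK //; exact: lt0r_neq0 (L_gt0). Qed.

Lemma a_abs_lt1 : `|a| < 1.
Proof.
rewrite abs_a /a /a_ratio -mulNr ltr_pdivrMr; last exact: L_gt0.
have := Lr_pos; rewrite -/L -/r; lra.
Qed.

End Alg.

Section Alg2.
Variables (R : realType) (p : R).
Hypothesis hp : 0 < p < 1.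
Let L := lamPF p.
Let r := lamr p.
Let a := a_ratio p.
Let W := 1 / (1 - L).
Let Z := 1 / (1 - r).

Lemma sgn2 k : (-1) ^+ k * (-1) ^+ k = 1 :> R.
Proof. by rewrite -exprD addnn -mul2n exprM sqrrN !expr1n. Qed.

Lemma gform n : 
  g_fin p n.+1 = L * (W - a ^+ n.+1 * Z) / (W - a ^+ n * Z).
Proof.
rewrite /g_fin /= (@abs_a R p hp) !(exprNn (a_ratio p)) -/L -/r -/a.
have e1 : (-1) ^+ n.+2 * ((-1) ^+ n.+1 * a ^+ n.+1) = - a ^+ n.+1.
  by rewrite mulrA [(-1) ^+ n.+2]exprS mulNr mul1r mulNr sgn2 mulN1r.
have e2 : (-1) ^+ n.+1 * ((-1) ^+ n * a ^+ n) = - a ^+ n.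
  by rewrite mulrA [(-1) ^+ n.+1]exprS mulNr mul1r mulNr sgn2 mulN1r.
rewrite e1 e2 /W /Z; congr (_ / _); ring.
Qed.
End Alg2.

Section Alg3.
Variables (R : realType) (p : R).
Hypothesis hp : 0 < p < 1.
Let L := lamPF p.
Let r := lamr p.
Let a := a_ratio p.
Let W := 1 / (1 - L).
Let Z := 1 / (1 - r).

Let p0 := @p_gt0 R p hp.
Let p1 := @p_lt1 R p hp.
Let L0 : 0 < L := @L_gt0 R p hp.
Let L1 : L < 1 := @L_lt1 R p hp.
Let r0 : r < 0 := @r_lt0 R p hp.

Ltac hyps := have := p0; have := p1; have := L0; have := L1; have := r0; move=> ? ? ? ? ?.
Ltac neq := hyps; repeat (apply/andP; split); apply: lt0r_neq0; lra.

Lemma W_gt1 : 1 < W.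
Proof.
have h : W * (1 - L) = 1 by rewrite /W; field; neq.
move: h; rewrite /W; move: (1 / (1 - L)) => w h; hyps; nra.
Qed.

Lemma Z_bnd : 0 < Z < 1.
Proof.
have h : Z * (1 - r) = 1 by rewrite /Z; field; neq.
move: h; rewrite /Z; move: (1 / (1 - r)) => w h; hyps; apply/andP; split; nra.
Qed.

Lemma den_pos k : 0 < W - a ^+ k * Z.
Proof.
have ha : `|a ^+ k| <= 1 by rewrite normrX; apply: exprn_ile1 => //; exact: ltW (@a_abs_lt1 R p hp).
have hb : a ^+ k <= 1 by apply: le_trans (ler_norm _) ha.
have := W_gt1; have /andP[z0 z1] := Z_bnd.
nra.
Qed.

Lemma den_neq0 k : W - a ^+ k * Z != 0.
Proof. by rewrite gt_eqF // den_pos. Qed.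

Lemma La' : L * a = r. Proof. exact: (@La R p hp). Qed.

Lemma g2 : g_fin p 2 = 1 - p ^+ 2.
Proof.
rewrite (@gform R p hp 1) -/L -/W -/Z -/a.
have hsum : L + r = 1 - p by rewrite /L /r /lamPF /lamr; field.
have hprod : L * r = - (p * (1 - p)).
  rewrite /L /r /lamPF /lamr.
  transitivity (((1 - p) ^+ 2 - Num.sqrt ((1 - p) * (3 * p + 1)) ^+ 2) / 4); first by field.
  by rewrite (@sq2 R p hp); field.
have hE : L * (W - a ^+ 2 * Z) = (1 - p ^+ 2) * (W - a ^+ 1 * Z).
  apply/eqP; rewrite -subr_eq0; apply/eqP.
  have hb : L + r - L * r - 1 + p ^+ 2 = 0 by rewrite hprod; hyps; lra.
  have aE : a = r / L by [].
  transitivity ((L - r) * (L + r - L * r - 1 + p ^+ 2) / (L * (1 - L) * (1 - r))).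
    rewrite aE /W /Z; field.
    neq.
  by rewrite hb mulr0 mul0r.
by rewrite hE mulfK // den_neq0.
Qed.

Lemma gg n : g_fin p n.+2 * g_fin p n.+1 = (1 - p) * g_fin p n.+1 + p * (1 - p).
Proof.
rewrite !(@gform R p hp) -/L -/W -/Z -/a.
set D0 := W - a ^+ n * Z.
set D1 := W - a ^+ n.+1 * Z.
set D2 := W - a ^+ n.+2 * Z.
have d0 : D0 != 0 by exact: den_neq0.
have d1 : D1 != 0 by exact: den_neq0.
have key : L ^+ 2 * D2 = (1 - p) * L * D1 + p * (1 - p) * D0.
  apply/eqP; rewrite -subr_eq0; apply/eqP.
  transitivity (W * (L ^+ 2 - (1 - p) * L - p * (1 - p))
     - a ^+ n * Z * ((L * a) ^+ 2 - (1 - p) * (L * a) - p * (1 - p))).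
    by rewrite /D0 /D1 /D2 !exprS; ring.
  rewrite La' (@L_quad R p hp) (@r_quad R p hp) -/L -/r; ring.
transitivity (L ^+ 2 * D2 / D0); first by field; apply/andP; split.
by rewrite key; field.
Qed.

Lemma gbnd n : 1 - p ^+ 2 <= g_fin p n.+2 <= 1.
Proof.
hyps; elim: n => [|n /andP[h1 h2]]; first by rewrite g2; apply/andP; split; nra.
have e := gg n.+1.
move: e h1 h2; move: (g_fin p n.+3) (g_fin p n.+2) => y x e h1 h2.
have x0 : 0 < x by nra.
have hA : 0 <= p * (1 - p) * (1 - x) by apply: mulr_ge0; nra.
have hB : 0 <= p * (x - (1 - p)) by nra.
apply/andP; split; nra.
Qed.

Lemma g_pos n : 0 < g_fin p n.+2.
Proof. by have /andP[h _] := gbnd n; hyps; nra. Qed.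

Lemma gq n : (1 + p) * g_fin p n.+2 <= 1 + p - p ^+ 2.
Proof.
hyps; case: n => [|n]; first by rewrite g2; nra.
have e := gg n.+1.
have /andP[h1 h2] := gbnd n.
have x0 := g_pos n.
move: e h1 h2 x0; move: (g_fin p n.+3) (g_fin p n.+2) => y x e h1 h2 x0.
have hC : 0 <= p * (x - (1 - p ^+ 2)) by nra.
have : x * ((1 + p) * y - (1 + p - p ^+ 2)) <= 0 by nra.
move=> h; nra.
Qed.

Lemma g_recE n : g_fin p n.+3 = (1 - p) + p * (1 - p) / g_fin p n.+2.
Proof.
have x0 := g_pos n.
apply: (mulIf (lt0r_neq0 x0)); rewrite (gg n.+1); field; exact: lt0r_neq0.
Qed.

End Alg3.

Set Implicit Arguments. Unset Strict Implicit. Unset Printing Implicit Defensive.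

Definition enatG (k : nat) : GState := if k is k'.+1 then Some k' else None.

Lemma TEL (R : realType) (f : GState -> R) (h : nat -> R) :
  (forall s, 0 <= f s) ->
  (forall n, f (Some n.+2) = h n.+2 - h n.+3) ->
  h @ \oo --> 0 ->
  \esum_(s in [set: GState]) (f s)%:E = (f None + f (Some 0) + f (Some 1) + h 2)%:E.
Proof.
move=> f0 fh hcvg.
have -> : [set: GState] = enatG @` [set: nat].
  apply/seteqP; split => // s _; case: s => [k|]; first by exists k.+1.
  by exists 0%N.
rewrite esum_image; last by move=> [|i] [|j] //= _ _ [->].
rewrite -nneseries_esumT; last by move=> n; rewrite lee_fin.
set C := f None + f (Some 0) + f (Some 1) + h 2.
have PS : forall k, \sum_(0 <= i < k.+3) (f (enatG i))%:E = (C - h k.+2)%:E.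
  move=> k; rewrite sumEFin; congr (_%:E).
  rewrite big_nat_recl // big_nat_recl // big_nat_recl //=.
  rewrite (@telescope_sumr_eq _ 0 k (fun i => - h i.+2)) //; last first.
    by move=> i _ /=; rewrite fh; ring.
  rewrite /C; ring.
have cv : (fun n => \sum_(0 <= i < n) (f (enatG i))%:E) @ \oo --> C%:E.
  rewrite -(cvg_shiftn 3) /=.
  have -> : (fun n => \sum_(0 <= i < n + 3) (f (enatG i))%:E) = (fun n => (C - h n.+2)%:E).
    by apply: funext => n; rewrite addn3 PS.
  apply: cvg_EFin; first exact: nearW.
  rewrite /comp /=.
  rewrite -[X in _ --> X](subr0 C); apply: cvgB; first exact: cvg_cst.
  move: hcvg; rewrite -(@cvg_shiftn 2 R^o h) /=.
  by under eq_fun do rewrite addn2.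
exact: cvg_lim.
Qed.

Lemma esum_single (R : realType) (f : GState -> R) s1 :
  (forall s, s <> s1 -> f s = 0) -> 0 <= f s1 ->
  \esum_(s in [set: GState]) (f s)%:E = (f s1)%:E.
Proof.
move=> fz f0.
rewrite -(@esum_set1 R _ s1 (fun s => (f s)%:E)); last by rewrite lee_fin.
rewrite [RHS](esum_mkcond [set s1]); apply: eq_esum => s _.
case: (boolP (s \in [set s1])) => // hs.
rewrite fz //; move=> e; move: hs; by rewrite e mem_set.
Qed.

Lemma TEL0 (R : realType) (f : GState -> R) :
  (forall s, 0 <= f s) ->
  (forall n, f (Some n.+2) = 0) ->
  \esum_(s in [set: GState]) (f s)%:E = (f None + f (Some 0) + f (Some 1))%:E.
Proof.
move=> f0 fz.
rewrite (@TEL R f (geometric 0 (2^-1))) //.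
- by rewrite /geometric /= mul0r addr0.
- by move=> n; rewrite fz /geometric /= !mul0r subr0.
- apply: cvg_geometric; rewrite ger0_norm ?invr_ge0 ?ler0n //.
  by rewrite invf_lt1 // ltr1n.
Qed.

Definition nxt (s : GState) (b : bool) : GState :=
  match s with
  | Some 0 | Some 1 => if b then Some 1 else Some 2
  | Some n => if b then Some 0 else Some n.+1
  | None => if b then Some 0 else None
  end.

Lemma tau_nxt s b : tau (nxt s b) = b.
Proof. by case: s => [[|[|n]]|]; case: b. Qed.

Lemma nxt_some s b : s != None -> nxt s b != None.
Proof. by case: s => [[|[|n]]|]; case: b. Qed.

Section Chain.
Variables (R : realType) (p : R).

Lemma Pi_supp s t : Pi_p p s t != 0 -> t = nxt s (tau t).
Proof.
case: s => [[|[|n]]|]; rewrite /Pi_p /=.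
- by case: (t =P Some 1) => [->|]; rewrite ?eqxx.
- case: (t =P Some 1) => [->//|_]; case: (t =P Some 2) => [->//|_]; by rewrite eqxx.
- case: (t =P Some n.+3) => [->//|_]; case: (t =P Some 0) => [->//|_]; by rewrite eqxx.
- case: (t =P None) => [->//|_]; case: (t =P Some 0) => [->//|_]; by rewrite eqxx.
Qed.

Fixpoint beta (s : GState) (y : seq bool) : R :=
  if y is b :: y' then Pi_p p s (nxt s b) * beta (nxt s b) y' else 1.

Fixpoint detpath (s : GState) (y : seq bool) : seq GState :=
  if y is b :: y' then nxt s b :: detpath (nxt s b) y' else [::].

Definition prodP s rest :=
  \prod_(j < size rest) Pi_p p (nth s (s :: rest) j) (nth s (s :: rest) j.+1).

Lemma path_probE (pi : GState -> R) s rest :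
  path_prob p pi (s :: rest) = pi s * prodP s rest.
Proof. by []. Qed.

Lemma prodP_cons s t rest : prodP s (t :: rest) = Pi_p p s t * prodP t rest.
Proof.
rewrite /prodP /= big_ord_recl /=; congr (_ * _).
apply: eq_bigr => i _ /=.

rewrite (@set_nth_default _ (t :: rest) s t i) /=; last by rewrite ltnS ltnW.
by rewrite (@set_nth_default _ rest s t i).
Qed.

Lemma prodP_det s y : prodP s (detpath s y) = beta s y.
Proof.
elim: y s => [|b y IH] s /=; first by rewrite /prodP big_ord0.
by rewrite prodP_cons IH.
Qed.

Lemma prodP_nz s rest : prodP s rest != 0 -> rest = detpath s (map tau rest).
Proof.
elim: rest s => [|t rest IH] s //=.
rewrite prodP_cons mulf_eq0 negb_or => /andP[h1 h2].
by rewrite -(Pi_supp h1) -(IH _ h2).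
Qed.

Lemma size_det s y : size (detpath s y) = size y.
Proof. by elim: y s => [|b y IH] s //=; rewrite IH. Qed.

Lemma map_tau_det s y : map tau (detpath s y) = y.
Proof. by elim: y s => [|b y IH] s //=; rewrite IH tau_nxt. Qed.

Lemma ghoc_red (pi : GState -> R) x0 y :
  ghoc_tau_cyl p pi (x0 :: y) =
  \esum_(s0 in [set s0 | tau s0 = x0]) (pi s0 * beta s0 y)%:E.
Proof.
rewrite /ghoc_tau_cyl.
set A := [set s | _].
set B := (fun s0 => s0 :: detpath s0 y) @` [set s0 | tau s0 = x0].
have -> : \esum_(s in A) (path_prob p pi s)%:E = \esum_(s in B) (path_prob p pi s)%:E.
  rewrite esum_mkcond [RHS]esum_mkcond; apply: eq_esum => s _.
  case: (boolP (s \in B)) => sB.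
    have sA : s \in A.
      move: sB; rewrite inE => -[s0 /= t0 <-]; rewrite mem_set // /A /=.
      by rewrite size_det map_tau_det t0.
    by rewrite sA.
  case: (boolP (s \in A)) => // sA.
  move: sA; rewrite inE => -[]; case: s sB => // s0 rest sB [hs]; case=> t0 ht.
  case: (eqVneq (prodP s0 rest) 0) => hz.
    by rewrite (path_probE pi s0 rest) hz mulr0.
  have := prodP_nz hz; rewrite ht => er.
  by exfalso; move: sB; rewrite er mem_set //; exists s0.
rewrite esum_image; last by move=> u v _ _ [].
by apply: eq_esum => s0 _; rewrite path_probE prodP_det.
Qed.

End Chain.

Definition fb (a b d : bool) : bool := b && (a || d).

Section Inter.
Variables (R : realType) (p : R).
Hypothesis hp : 0 < p < 1.

Definition rho (b : bool) : R := if b then p else 1 - p.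

Fixpoint phi (a b : bool) (y : seq bool) : R :=
  if y is c :: y' then
    rho true * (fb a b true == c)%:R * phi b true y' +
    rho false * (fb a b false == c)%:R * phi b false y'
  else 1.

Definition vv n := (1 - g_fin p n) / p.

Definition K (s : GState) (a b : bool) : R :=
  match s with
  | Some 0 => if a && b then 1 else 0
  | Some 1 => if a then rho b else 0
  | Some n => if a then 0 else (if b then vv n else 1 - vv n)
  | None => 0
  end.

Definition Kphi s y :=
  K s false false * phi false false y + K s false true * phi false true y +
  K s true false * phi true false y + K s true true * phi true true y.

Lemma phi10 y : phi true false y = phi false false y.
Proof. by case: y. Qed.

Let p0 := @p_gt0 R p hp.
Let p1 := @p_lt1 R p hp.

Lemma beta_K s y : s != None -> beta p s y = Kphi s y.
Proof.
have pn0 : p != 0 by apply: lt0r_neq0.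
elim: y s => [|c y IH] s hs.
  rewrite /Kphi /=; case: s hs => [[|[|n]]|] // _; rewrite /K /rho /=; ring.
rewrite /= IH; last exact: nxt_some.
rewrite /Kphi /= /rho.
case: s hs => [[|[|n]]|] // _; case: c; rewrite /Pi_p /K /fb /= ?phi10 /vv /rho.
- ring.
- ring.
- ring.
- rewrite (@g2 R p hp); field; exact: pn0.
- have g0 := @g_pos R p hp n; field; exact: pn0.
- have g0 := @g_pos R p hp n.
  rewrite eqxx (@g_recE R p hp n); field.
  by apply/andP; split => //; apply: lt0r_neq0.
Qed.

End Inter.

Fixpoint mt (t : seq bool) (x : seq bool) : bool :=
  if x is c :: y then
    (fb (nth false t 0) (nth false t 1) (nth false t 2) == c) && mt (behead t) y
  else true.

Definition mtP (t x : seq bool) (j : nat) :=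
  fb (nth false t j) (nth false t j.+1) (nth false t j.+2) == nth false x j.

Lemma mt_all t x : mt t x = all (mtP t x) (iota 0 (size x)).
Proof.
elim: x t => [|c y IH] t //=.
rewrite IH -add1n iotaDl all_map /mtP /=; congr (_ && _).
by apply: eq_all => j /=; rewrite !nth_behead.
Qed.

Lemma forall_all n (P : nat -> bool) :
  [forall j : 'I_n, P j] = all P (iota 0 n).
Proof.
apply/forallP/allP => [H j|H j].
  by rewrite mem_iota add0n => /= hj; exact: (H (Ordinal hj)).
by apply: H; rewrite mem_iota add0n /=.
Qed.

Lemma ext_at (m : int) n (t : n.-tuple bool) (k : nat) : (k < n)%N ->
  ext m t (m + k%:Z) = nth false t k.
Proof.
move=> hk; rewrite /ext.
have -> : m + k%:Z - m = k%:Z by ring.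
by rewrite le0z_nat ltz_nat hk absz_nat.
Qed.

Lemma Tmap_ext (m : int) n (t : n.+2.-tuple bool) (j : nat) : (j < n)%N ->
  T_map (ext (m - 1) t) (m + j%:Z) =
  fb (nth false t j) (nth false t j.+1) (nth false t j.+2).
Proof.
move=> hj; rewrite /T_map /fb.
have e0 : m + j%:Z = m - 1 + (j.+1)%:Z by rewrite -addn1 PoszD; ring.
have e1 : m + j%:Z - 1 = m - 1 + j%:Z by ring.
have e2 : m + j%:Z + 1 = m - 1 + (j.+2)%:Z by rewrite -addn2 PoszD; ring.
rewrite e1 e2 e0 !ext_at //; lia.
Qed.

Lemma tuple_sum_cons (R : realType) k (F : k.+1.-tuple bool -> R) :
  \sum_(t : k.+1.-tuple bool) F t =
  \sum_(a : bool) \sum_(t : k.-tuple bool) F [tuple of a :: t].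
Proof.
rewrite pair_big /=.
pose h := fun pr : bool * k.-tuple bool => [tuple of pr.1 :: pr.2].
pose hi := fun t : k.+1.-tuple bool => (thead t, [tuple of behead t]).
rewrite (reindex h) /=; last first.
  apply: onW_bij; exists hi.
    by case=> a t; rewrite /hi /h theadE; congr pair; apply: val_inj.
  by move=> t; rewrite /hi /h /= [RHS]tuple_eta.
by apply: eq_bigr => -[a t].
Qed.

Section TBFside.
Variables (R : realType) (p : R).

Lemma prod_cons k a (t : k.-tuple bool) :
  \prod_(j < k.+1) (if tnth [tuple of a :: t] j then p else 1 - p) =
  rho p a * \prod_(j < k) (if tnth t j then p else 1 - p).
Proof. by rewrite big_ord_recl tnth0; congr (_ * _); apply: eq_bigr => j _; rewrite tnthS. Qed.

Lemma Hlem (x : seq bool) a b :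
  \sum_(t : (size x).-tuple bool)
     (\prod_(j < size x) (if tnth t j then p else 1 - p)) * (mt (a :: b :: t) x)%:R
  = phi p a b x.
Proof.
elim: x a b => [|c y IH] a b /=.
  rewrite (big_pred1 [tuple]) //=; first by rewrite big_ord0 mulr1.
  by move=> t /=; symmetry; apply/eqP; exact: tuple0.
rewrite tuple_sum_cons big_bool /=.
rewrite -!IH !mulr_sumr; congr (_ + _); apply: eq_bigr => t _;
  rewrite prod_cons /rho /=; case: (_ == c); rewrite /= ?mul0r ?mulr0 ?mul1r ?mulr1; ring.
Qed.

Lemma tbf_phi (m : int) x :
  tbf_cyl p m x = \sum_(a : bool) \sum_(b : bool) rho p a * rho p b * phi p a b x.
Proof.
rewrite /tbf_cyl /mu_p_window.
under eq_bigr => t _.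
  rewrite /= (@forall_all (size x) (fun j : nat => T_map (ext (m - 1) t) (m + j%:Z) == nth false x j)).
  have -> : all (fun j : nat => T_map (ext (m - 1) t) (m + j%:Z) == nth false x j)
      (iota 0 (size x)) = mt t x.
    rewrite mt_all; apply: eq_in_all => j; rewrite mem_iota add0n /= => hj.
    by rewrite Tmap_ext.
  over.
rewrite tuple_sum_cons; apply: eq_bigr => a _.
rewrite tuple_sum_cons; apply: eq_bigr => b _.
rewrite -Hlem mulr_sumr; apply: eq_bigr => t _.
rewrite !prod_cons /=; ring.
Qed.

End TBFside.

Section Stat.
Variables (R : realType) (p : R).
Hypothesis hp : 0 < p < 1.

Let p0 : 0 < p := @p_gt0 R p hp.
Let p1 : p < 1 := @p_lt1 R p hp.

Fixpoint cs (n : nat) : R :=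
  match n with
  | 0 => (1 - p) * p ^+ 2
  | 1 => p ^+ 2
  | 2 => (1 - p) * p ^+ 2
  | S ((S (S k)) as m) => g_fin p m * cs m
  end.

Lemma cs_rec n : cs n.+3 = g_fin p n.+2 * cs n.+2.
Proof. by []. Qed.

Lemma cs_ge0 n : 0 <= cs n.
Proof.
have := p0; have := p1 => ? ?.
elim: n => [|[|[|n]] IH] /=; try timeout 10 nra.
by rewrite mulr_ge0 // ltW // (@g_pos R p hp).
Qed.

Let q := (1 + p - p ^+ 2) / (1 + p).

Lemma q_bnd : 0 <= q < 1.
Proof.
have := p0; have := p1 => ? ?.
rewrite /q; apply/andP; split.
  by apply: divr_ge0; timeout 20 nra.
by rewrite ltr_pdivrMr; timeout 20 nra.
Qed.

Lemma g_le_q n : g_fin p n.+2 <= q.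
Proof.
have := p0; have := p1 => ? ?.
rewrite /q ler_pdivlMr; last by timeout 20 nra.
by rewrite mulrC; exact: (@gq R p hp).
Qed.

Lemma cs_geo n : cs n.+2 <= cs 2 * q ^+ n.
Proof.
elim: n => [|n IH]; first by rewrite expr0 mulr1.
rewrite cs_rec exprS mulrCA.
apply: ler_pM; [exact: ltW (@g_pos R p hp n)|exact: cs_ge0|exact: g_le_q|exact: IH].
Qed.

Lemma cs_cvg : cs @ \oo --> 0.
Proof.
have /andP[q0 q1] := q_bnd.
rewrite -(@cvg_shiftn 2 R^o cs) /=.
apply: (@squeeze_cvgr _ _ _ _ (geometric 0 q) (geometric (cs 2) q)).
- by near=> n; rewrite /= mul0r addn2 cs_ge0 /=; exact: cs_geo.
- by apply: cvg_geometric; rewrite ger0_norm.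
- by apply: cvg_geometric; rewrite ger0_norm.
Unshelve. all: by end_near.
Qed.

Definition hs n := cs n / p + cs n.+1 / p ^+ 2.

Lemma hs_tel n : cs n.+2 = hs n.+2 - hs n.+3.
Proof.
rewrite /hs !cs_rec.
have e := @g_recE R p hp n.
have g0 := @g_pos R p hp n.
rewrite e; timeout 20 field.
by apply/andP; split; apply: lt0r_neq0.
Qed.

Lemma hs_cvg : hs @ \oo --> 0.
Proof.
rewrite /hs -[0 : R]addr0.
apply: cvgD.
  by rewrite -[0 : R](mul0r p^-1); apply: cvgMl; exact: cs_cvg.
rewrite -[0 : R](mul0r (p ^+ 2)^-1); apply: cvgMl.
by move: cs_cvg; rewrite -(@cvg_shiftS R^o cs).
Qed.

Lemma cs_total : cs 0 + cs 1 + hs 2 = 1.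
Proof.
rewrite /hs /= (@g2 R p hp); field; exact: lt0r_neq0.
Qed.

Definition pistar (s : GState) : R := if s is Some n then cs n else 0.

End Stat.

Section Stat2.
Variables (R : realType) (p : R).
Hypothesis hp : 0 < p < 1.

Let p0 : 0 < p := @p_gt0 R p hp.
Let p1 : p < 1 := @p_lt1 R p hp.

Lemma Pi_ge0 s t : 0 <= Pi_p p s t.
Proof.
have := p0; have := p1 => ? ?.
have L0 := @L_gt0 R p hp; have L1 := @L_lt1 R p hp.
case: s => [[|[|n]]|]; rewrite /Pi_p /=; repeat case: ifP => _; rewrite ?ler01 ?lexx //; try lra.
- exact: ltW (@g_pos R p hp n).
- by have /andP[_ h] := @gbnd R p hp n; lra.
Qed.

Lemma pistar_ge0 s : 0 <= pistar p s.
Proof. by case: s => [n|] //=; exact: (@cs_ge0 R p hp). Qed.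

Lemma pistar_total :
  \esum_(s in [set: GState]) (pistar p s)%:E = 1%:E.
Proof.
rewrite (@TEL R (pistar p) (hs p)) //.
- by rewrite /= add0r (@cs_total R p hp).
- exact: pistar_ge0.
- by move=> n; exact: (@hs_tel R p hp n).
- exact: (@hs_cvg R p hp).
Qed.

Lemma pistar_stat : stationary_dist p (pistar p).
Proof.
split; first exact: pistar_ge0.
split; first exact: pistar_total.
have f0 : forall t s, 0 <= pistar p s * Pi_p p s t.
  by move=> t s; apply: mulr_ge0; [exact: pistar_ge0|exact: Pi_ge0].
case=> [[|[|[|k]]]|].
- rewrite (@TEL R (fun s => pistar p s * Pi_p p s (Some 0)) (cs p)) //.
  + by rewrite /Pi_p /=; congr EFin; ring.
  + move=> n; rewrite (@cs_rec R p n) /Pi_p /=; ring.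
  + exact: (@cs_cvg R p hp).
- rewrite TEL0 //; first by rewrite /Pi_p /=; congr EFin; ring.
  by move=> n; rewrite /Pi_p /= mulr0.
- rewrite TEL0 //; first by rewrite /Pi_p /=; congr EFin; ring.
  by move=> n; rewrite /Pi_p /= mulr0.
- rewrite (@esum_single R _ (Some k.+2)); last exact: f0.
  + change ((cs p k.+2 * Pi_p p (Some k.+2) (Some k.+3))%:E = (cs p k.+3)%:E).
    by rewrite (@cs_rec R p k) /Pi_p /= eqxx mulrC.
  + case=> [[|[|n]]|] hn; rewrite /Pi_p /= ?mulr0 ?mul0r //.
    case: (Some k.+3 =P Some n.+3) => [[e]|_]; last by rewrite mulr0.
    by exfalso; apply: hn; rewrite e.
- rewrite (@esum_single R _ None); last exact: f0.
  + by rewrite /= mul0r.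
  + case=> [[|[|n]]|] hn; rewrite /Pi_p /= ?mulr0 ?mul0r //; by case: hn.
Qed.

End Stat2.

Section Uniq.
Variables (R : realType) (p : R).
Hypothesis hp : 0 < p < 1.

Let p0 : 0 < p := @p_gt0 R p hp.
Let p1 : p < 1 := @p_lt1 R p hp.

Lemma uniq_stat (pi : GState -> R) : stationary_dist p pi -> pi = pistar p.
Proof.
move=> [pi0 [tot st]].
have f0 : forall t s, 0 <= pi s * Pi_p p s t.
  by move=> t s; apply: mulr_ge0; [exact: pi0|exact: (@Pi_ge0 R p hp)].
have eN : pi None = 0.
  have := st None.
  rewrite (@esum_single R _ None); last exact: f0.
    move=> /(congr1 fine); rewrite /Pi_p eqxx /= => h.
    have L1 := @L_lt1 R p hp.
    have : pi None * (1 - lamPF p) = 0 by rewrite mulrBr mulr1 h subrr.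
    by move/eqP; rewrite mulf_eq0 => /orP[/eqP //|]; rewrite subr_eq0 => /eqP e; lra.
  case=> [[|[|n]]|] hn; rewrite /Pi_p /= ?mulr0 ?mul0r //; by case: hn.
have e1 : pi (Some 0) = (1 - p) * pi (Some 1).
  have := st (Some 1); rewrite TEL0 //; last by move=> n; rewrite /Pi_p /= mulr0.
  by move=> /(congr1 fine); rewrite /Pi_p /= eN => h; lra.
have e2 : pi (Some 2) = (1 - p) * pi (Some 1).
  have := st (Some 2); rewrite TEL0 //; last by move=> n; rewrite /Pi_p /= mulr0.
  by move=> /(congr1 fine); rewrite /Pi_p /= eN => h; lra.
have e3 : forall k, pi (Some k.+3) = g_fin p k.+2 * pi (Some k.+2).
  move=> k; have := st (Some k.+3).
  rewrite (@esum_single R _ (Some k.+2)); last exact: f0.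
    by move=> /(congr1 fine); rewrite /Pi_p /= eqxx mulrC => <-.
  case=> [[|[|n]]|] hn; rewrite /Pi_p /= ?mulr0 ?mul0r ?eN //.
  case: (Some k.+3 =P Some n.+3) => [[e]|_]; last by rewrite mulr0.
  by exfalso; apply: hn; rewrite e.
set kap := pi (Some 1) / p ^+ 2.
have pk : forall n, pi (Some n) = kap * cs p n.
  have pn0 : p != 0 by apply: lt0r_neq0.
  have base2 : pi (Some 2) = kap * cs p 2 by rewrite e2 /kap /=; field.
  have big : forall n, pi (Some n.+2) = kap * cs p n.+2.
    elim=> [//|n IH]; rewrite e3 IH (@cs_rec R p n); ring.
  case=> [|[|n]]; last exact: big.
    by rewrite e1 /kap /=; field.
  by rewrite /kap /=; field.
have hk : kap = 1.
  move: tot; rewrite (@TEL R pi (fun n => kap * hs p n)) //.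
  - move=> /(congr1 fine); rewrite eN !pk add0r -!mulrDr (@cs_total R p hp).
    by rewrite mulr1.
  - by move=> n; rewrite pk (@hs_tel R p hp n) mulrBr.
  - rewrite -[0 : R](mulr0 kap); apply: cvgMr; exact: (@hs_cvg R p hp).
apply: funext => -[n|]; last by rewrite eN.
by rewrite pk hk mul1r.
Qed.

End Uniq.

Section Final.
Variables (R : realType) (p : R).
Hypothesis hp : 0 < p < 1.

Let p0 : 0 < p := @p_gt0 R p hp.
Let p1 : p < 1 := @p_lt1 R p hp.

Lemma phi_ge0 a b y : 0 <= phi p a b y.
Proof.
have := p0; have := p1 => ? ?.
elim: y a b => [|c y IH] a b /=; first exact: ler01.
by apply: addr_ge0; apply: mulr_ge0; rewrite ?IH //; apply: mulr_ge0; rewrite ?ler0n // /rho; lra.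
Qed.

Lemma K_ge0 s a b : 0 <= K p s a b.
Proof.
have := p0; have := p1 => ? ?.
case: s => [[|[|n]]|] /=; rewrite /K /rho /vv; repeat case: ifP => _ //; try lra.
- have /andP[h1 h2] := @gbnd R p hp n; apply: divr_ge0; lra.
- have /andP[h1 h2] := @gbnd R p hp n.
  rewrite subr_ge0 ler_pdivrMr //; nra.
Qed.

Definition T (x0 a b : bool) y (s : GState) : R :=
  pistar p s * K p s a b * ((a == x0)%:R * phi p a b y).

Lemma T_ge0 x0 a b y s : 0 <= T x0 a b y s.
Proof.
rewrite /T; apply: mulr_ge0; first apply: mulr_ge0.
- exact: (@pistar_ge0 R p hp).
- exact: K_ge0.
- by apply: mulr_ge0; [exact: ler0n|exact: phi_ge0].
Qed.

Lemma split_pt x0 y s :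
  (if s \in [set s0 | tau s0 = x0] then (pistar p s * beta p s y)%:E else 0%E) =
  (T x0 false false y s + T x0 false true y s + T x0 true false y s + T x0 true true y s)%:E.
Proof.
case: s => [n|]; last first.
  by rewrite /T /= !mul0r !addr0; case: ifP.
rewrite (@beta_K R p hp) // /Kphi /T.
case: (boolP (Some n \in [set s0 | tau s0 = x0])) => hin.
  have ht : tau (Some n) = x0 by move: hin; rewrite inE.
  congr EFin; clear hin.
  case: n ht => [|[|n]] /= <-; rewrite /K /= ?eqxx /=; ring.
have ht : tau (Some n) != x0 by apply/eqP => e; move: hin; rewrite mem_set.
congr EFin; clear hin.
case: n ht => [|[|n]]; case: x0 => //= _; rewrite /K /=; ring.
Qed.


Lemma esum_T x0 y :
  \esum_(s in [set: GState])
     (T x0 false false y s + T x0 false true y s + T x0 true false y s + T x0 true true y s)%:E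
  = (cs p 3 * ((false == x0)%:R * phi p false false y) / p ^+ 2
     + cs p 2 * ((false == x0)%:R * phi p false true y) / p
     + cs p 1 * (1 - p) * ((true == x0)%:R * phi p true false y)
     + (cs p 0 + cs p 1 * p) * ((true == x0)%:R * phi p true true y))%:E.
Proof.
have pn0 : p != 0 by apply: lt0r_neq0.
under eq_esum do rewrite !EFinD.
have G := T_ge0.
rewrite esumD; last 2 first.
  - by move=> s _; rewrite -!EFinD lee_fin !addr_ge0.
  - by move=> s _; rewrite lee_fin.
rewrite esumD; last 2 first.
  - by move=> s _; rewrite -!EFinD lee_fin !addr_ge0.
  - by move=> s _; rewrite lee_fin.
rewrite esumD; last 2 first.
  - by move=> s _; rewrite lee_fin.
  - by move=> s _; rewrite lee_fin.
set k00 := (false == x0)%:R * phi p false false y.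
set k01 := (false == x0)%:R * phi p false true y.
rewrite (@TEL R (T x0 false false y) (fun n => cs p n.+1 * k00 / p ^+ 2)); last 3 first.
  - exact: G.
  - move=> n; have g0 := @g_pos R p hp n.
    rewrite (@cs_rec R p n.+1) (@cs_rec R p n) /T /K /= -/k00 /vv.
    rewrite (@g_recE R p hp n); field.
    by apply/andP; split => //; apply: lt0r_neq0.
  - rewrite -[0 : R](mul0r (p ^+ 2)^-1); apply: cvgMl.
    rewrite -[0 : R](mul0r k00); apply: cvgMl.
    by move: (@cs_cvg R p hp); rewrite -(@cvg_shiftS R^o (cs p)).
rewrite (@TEL R (T x0 false true y) (fun n => cs p n * k01 / p)); last 3 first.
  - exact: G.
  - move=> n; rewrite (@cs_rec R p n) /T /K /= -/k01 /vv; field; exact: pn0.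
  - rewrite -[0 : R](mul0r p^-1); apply: cvgMl.
    rewrite -[0 : R](mul0r k01); apply: cvgMl.
    exact: (@cs_cvg R p hp).
rewrite TEL0; last 2 first.
  - exact: G.
  - by move=> n; rewrite /T /K /= mulr0 mul0r.
rewrite TEL0; last 2 first.
  - exact: G.
  - by move=> n; rewrite /T /K /= mulr0 mul0r.
rewrite -!EFinD; congr EFin.
rewrite /T /K /rho /= -/k00 -/k01; ring.
Qed.

End Final.

Unset Implicit Arguments.

Theorem theorem3p7 (R : realType) (p : R) (hp : 0 < p < 1) :
  (exists! pi : GState -> R, stationary_dist p pi) /\
  (forall pi : GState -> R, stationary_dist p pi ->
     forall (m : int) (x : seq bool),
       ghoc_tau_cyl p pi x = (tbf_cyl p m x)%:E).
Proof.
have p0 := @p_gt0 R p hp.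
have pn0 : p != 0 by apply: lt0r_neq0.
split.
  exists (pistar p); split; first exact: (@pistar_stat R p hp).
  by move=> pi' st; symmetry; exact: (@uniq_stat R p hp pi' st).
move=> pi st m x; rewrite (@uniq_stat R p hp pi st).
case: x => [|x0 y].
  rewrite /ghoc_tau_cyl.
  have -> : [set s : seq GState | size s = size (@nil bool) /\ map tau s = [::]] = [set [::]].
    apply/seteqP; split => s /=; first by case: s => // a s [].
    by move=> ->.
  rewrite esum_set1; last by rewrite lee_fin ler01.
  rewrite (@tbf_phi R p m [::]) !big_bool /= /rho; congr EFin; ring.
rewrite (@ghoc_red R p) esum_mkcond.
under eq_esum do rewrite (@split_pt R p hp).
rewrite (@esum_T R p hp) (@tbf_phi R p m (x0 :: y)); congr EFin.
rewrite !big_bool /= /rho !(@phi10 R p) ?(@g2 R p hp) /=.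
case: x0 => /=; field; exact: pn0.
Qed.
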